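(* Let $N>0$, $d>0$ be real numbers with $0<N<1$ and $d^{2}\leq N^{-2}-1$. For every real $A>0$, the equation $F(z)+A=0$, where $F(z)=(1-Nz)^{2}\left(1-\frac{d^{2}}{z^{2}-1}\right)$, i.e. the quartic equation $(1-Nz)^{2}(z^{2}-1-d^{2})+A(z^{2}-1)=0$ in the complex variable $z$, has exactly two real roots and two (non-real) complex roots.
   Context: This is the (dimensionless) dispersion relation for Kelvin–Helmholtz perturbations of two thin co-flowing layers (a pure incompressible fluid and a bubbly fluid): $z=ad/(u_{20}-c)$ with $c$ the phase velocity, $d=1/(bk)$ the dimensionless wave length, $N=M/d$ with $M=(u_{20}-u_{10})/a$, and $A=h_0\rho_{20}/((H_0-h_0)\rho_{10})>0$. The equation $F(z)+A=0$ is regarded as the fourth-degree polynomial equation obtained by multiplying by $z^{2}-1$; roots are counted with multiplicity. *)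

(* Defs.v *)
From HB Require Import structures.
From mathcomp Require Import all_boot all_order all_algebra.
From mathcomp Require Import reals.
From mathcomp Require Import complex.
Set Implicit Arguments. Unset Strict Implicit. Unset Printing Implicit Defensive.
Import Order.TTheory GRing.Theory Num.Theory.
Local Open Scope ring_scope.

Definition KH_quartic (R : realType) (N d A : R) : {poly R} :=
  (1 - N *: 'X) ^+ 2 * ('X ^+ 2 - (1 + d ^+ 2)%:P) + A *: ('X ^+ 2 - 1).

Definition KH_quartic_C (R : realType) (N d A : R) : {poly R[i]} :=
  map_poly (real_complex R) (KH_quartic N d A).

(* Main.v *)
Require Import Defs.
From HB Require Import structures.
From mathcomp Require Import all_boot all_order all_algebra.
From mathcomp Require Import reals.
From mathcomp Require Import complex.
From mathcomp Require Import polyrcf.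
From mathcomp Require Import ring lra.
Import Order.TTheory GRing.Theory Num.Theory.
Local Open Scope ring_scope.

Lemma range (R : realType) (N e A x : R) : 0 < N -> N < 1 -> 1 < e -> 0 < A ->
  (1-N*x)^+2*(x^+2-e) + A*(x^+2-1) = 0 -> 1 < x^+2 /\ x^+2 < e.
Proof.
move=> N0 N1 e1 A0 h.
have sq : 0 <= (1 - N*x)^+2 by apply: sqr_ge0.
split.
- rewrite ltNge; apply/negP => hx.
  have hNx : (N*x)^+2 < 1.
    rewrite exprMn; have : N^+2 < 1 by nra.
    have : 0 <= x^+2 by apply: sqr_ge0. nra.
  have hp : 0 < (1 - N*x)^+2.
    rewrite lt_def sq andbT sqrf_eq0 subr_eq0; apply/eqP => h1.
    by move: hNx; rewrite -h1 expr1n ltxx.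
  nra.
- rewrite ltNge; apply/negP => hx. nra.
Qed.

Lemma pos_inj (R : realType) (N e A x y : R) : 0 < N -> N^+2 * e <= 1 -> 1 < e ->
  1 < x -> x < y -> y^+2 < e ->
  (1-N*x)^+2*(x^+2-e) + A*(x^+2-1) = 0 ->
  (1-N*y)^+2*(y^+2-e) + A*(y^+2-1) = 0 -> False.
Proof.
move=> N0 Ne e1 x1 xy ye hx hy.
have Ny : N * y < 1.
  have : (N*y)^+2 < 1.
    rewrite exprMn; have : 0 < N^+2 by nra.
    move=> N2; have : N^+2 * y^+2 < N^+2 * e by rewrite ltr_pM2l.
    lra.
  nra.
have Nxy : N*x < N*y by rewrite ltr_pM2l.
have h1 : (1 - N*y)^+2 < (1 - N*x)^+2.
  rewrite -subr_gt0.
  have -> : (1 - N*x)^+2 - (1 - N*y)^+2 = (N*y - N*x)*((1 - N*y) + (1 - N*x)) by ring.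
  apply: mulr_gt0; lra.
have h2 : (e - y^+2)*(x^+2-1) < (e - x^+2)*(y^+2-1).
  rewrite -subr_gt0.
  have -> : (e - x^+2)*(y^+2-1) - (e - y^+2)*(x^+2-1) = (e-1)*((y-x)*(y+x)) by ring.
  apply: mulr_gt0; first lra. apply: mulr_gt0; lra.
have h3 : (1 - N*y)^+2 * ((e - y^+2)*(x^+2-1)) < (1 - N*x)^+2 * ((e - x^+2)*(y^+2-1)).
  have x2 : 1 < x^+2 by nra.
  apply: ltr_pM => //; [exact: sqr_ge0| apply: mulr_ge0; lra].
have : (1 - N*y)^+2 * ((e - y^+2)*(x^+2-1)) = (1 - N*x)^+2 * ((e - x^+2)*(y^+2-1)).
  have ex : (1-N*x)^+2*(e - x^+2) = A*(x^+2-1) by lra.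
  have ey : (1-N*y)^+2*(e - y^+2) = A*(y^+2-1) by lra.
  rewrite !mulrA ex ey; ring.
lra.
Qed.

Lemma neg_inj (R : realType) (N e A x y : R) : 0 < N -> 1 < e ->
  x < y -> y < -1 -> x^+2 < e ->
  (1-N*x)^+2*(x^+2-e) + A*(x^+2-1) = 0 ->
  (1-N*y)^+2*(y^+2-e) + A*(y^+2-1) = 0 -> False.
Proof.
move=> N0 e1 xy y1 xe hx hy.
set u := - y. set v := - x.
have u1 : 1 < u by rewrite /u; lra.
have uv : u < v by rewrite /u /v; lra.
have ve : v^+2 < e by rewrite /v sqrrN.
have u2 : 1 < u^+2 by nra.
have uv2 : u^+2 < v^+2 by nra.
have K : 0 < (e-1)*u^+2 - (e - v^+2)*(u^+2-1).
  have : 0 <= (v^+2 - u^+2)*(u^+2-1) by apply: mulr_ge0; lra.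
  have : 0 < (u^+2-1)^+2 + (e-1).
    have : 0 <= (u^+2-1)^+2 by apply: sqr_ge0.
    lra.
  have -> : (e-1)*u^+2 - (e - v^+2)*(u^+2-1) = (v^+2 - u^+2)*(u^+2-1) + ((u^+2-1)^+2 + (e-1)) by ring.
  lra.
have Br : 0 < (1+N*u)^+2*(e-1)*(u+v) - N*(2+N*u+N*v)*(e-v^+2)*(u^+2-1).
  have -> : (1+N*u)^+2*(e-1)*(u+v) - N*(2+N*u+N*v)*(e-v^+2)*(u^+2-1) =
    (e-1)*(u+v) + N*(2*u*(e-1)*(u+v) - 2*(e-v^+2)*(u^+2-1))
    + N^+2*((u+v)*((e-1)*u^+2 - (e-v^+2)*(u^+2-1))) by ring.
  have t1 : 0 < (e-1)*(u+v) by apply: mulr_gt0; lra.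
  have t2 : 0 < 2*u*(e-1)*(u+v) - 2*(e-v^+2)*(u^+2-1).
    have : 0 <= (e-1)*(u*v) by apply: mulr_ge0; [lra| apply: mulr_ge0; lra].
    have -> : 2*u*(e-1)*(u+v) - 2*(e-v^+2)*(u^+2-1) =
      2*((e-1)*u^+2 - (e-v^+2)*(u^+2-1)) + 2*((e-1)*(u*v)) by ring.
    lra.
  have t3 : 0 < (u+v)*((e-1)*u^+2 - (e-v^+2)*(u^+2-1)) by apply: mulr_gt0; lra.
  have : 0 < N^+2 by apply: exprn_gt0.
  move=> N2.
  have : 0 < N*(2*u*(e-1)*(u+v) - 2*(e-v^+2)*(u^+2-1)) by apply: mulr_gt0.
  have : 0 < N^+2*((u+v)*((e-1)*u^+2 - (e-v^+2)*(u^+2-1))) by apply: mulr_gt0.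
  lra.
have id : (1+N*u)^+2*(e-u^+2)*(v^+2-1) - (1+N*v)^+2*(e-v^+2)*(u^+2-1)
   = (v-u)*((1+N*u)^+2*(e-1)*(u+v) - N*(2+N*u+N*v)*(e-v^+2)*(u^+2-1)) by ring.
have : (1+N*u)^+2*(e-u^+2)*(v^+2-1) - (1+N*v)^+2*(e-v^+2)*(u^+2-1) = 0.
  have ey : (1+N*u)^+2*(e - u^+2) = A*(u^+2-1).
    by rewrite /u mulrN sqrrN; lra.
  have ex : (1+N*v)^+2*(e - v^+2) = A*(v^+2-1).
    by rewrite /v mulrN sqrrN; lra.
  rewrite ey ex; ring.
rewrite id => /eqP; rewrite mulf_eq0 => /orP[|] /eqP; lra.
Qed.

Lemma der (R : realType) (N e A x : R) : 0 < N -> N^+2 * e <= 1 -> 1 < e ->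
  1 < x^+2 -> x^+2 < e ->
  (1-N*x)^+2*(x^+2-e) + A*(x^+2-1) = 0 ->
  2*(-N)*(1-N*x)*(x^+2-e) + (1-N*x)^+2*(2*x) + A*(2*x) = 0 -> False.
Proof.
move=> N0 Ne e1 x1 xe h1 h2.
have Nx : 0 < 1 - N*x.
  have : (N*x)^+2 < 1.
    rewrite exprMn; have : 0 < N^+2 by nra.
    move=> N2; have : N^+2 * x^+2 < N^+2 * e by rewrite ltr_pM2l.
    lra.
  nra.
have : (1-N*x)*(N*(e-x^+2)*(x^+2-1) + x*(1-N*x)*(e-1)) = 0.
  have -> : (1-N*x)*(N*(e-x^+2)*(x^+2-1) + x*(1-N*x)*(e-1)) =
    ((2*(-N)*(1-N*x)*(x^+2-e) + (1-N*x)^+2*(2*x) + A*(2*x))*(x^+2-1)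
     - 2*x*((1-N*x)^+2*(x^+2-e) + A*(x^+2-1)))/2 by field.
  by rewrite h1 h2; ring.
move/eqP; rewrite mulf_eq0 => /orP[/eqP|/eqP]; first lra.
have [xp|xn] := ltP 0 x.
- have : 0 < N*(e-x^+2)*(x^+2-1) by apply: mulr_gt0; [apply: mulr_gt0|]; lra.
  have : 0 < x*(1-N*x)*(e-1) by apply: mulr_gt0; [apply: mulr_gt0|]; lra.
  lra.
- have -> : N*(e-x^+2)*(x^+2-1) + x*(1-N*x)*(e-1) =
     - ((-x)*(e-1) + N*((x^+2-1)^+2 + (e-1))) by ring.
  have xn' : x < 0.
    rewrite lt_neqAle xn andbT; apply/eqP=> x0; move: x1; rewrite x0 expr2 mul0r; lra.
  have : 0 < (-x)*(e-1) by apply: mulr_gt0; lra.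
  have : 0 <= (x^+2-1)^+2 by apply: sqr_ge0.
  move=> s2.
  have : 0 < N*((x^+2-1)^+2 + (e-1)) by apply: mulr_gt0; lra.
  lra.
Qed.


Lemma hP (R : realType) (N d A x : R) :
  (KH_quartic N d A).[x] = (1 - N*x)^+2 * (x^+2 - (1+d^+2)) + A*(x^+2-1).
Proof. by rewrite /KH_quartic !hornerE. Qed.

Lemma hdP (R : realType) (N d A x : R) :
  (KH_quartic N d A)^`().[x] = 2*(-N)*(1-N*x)*(x^+2-(1+d^+2)) + (1-N*x)^+2*(2*x) + A*(2*x).
Proof.
rewrite /KH_quartic !(derivD, derivM, derivB, derivN, derivZ, derivX, derivC, expr2) /=.
rewrite !hornerE /=. ring.
Qed.

Lemma sizeP (R : realType) (N d A : R) : N != 0 -> A != 0 -> size (KH_quartic N d A) = 5%N.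
Proof.
move=> N0 A0; rewrite /KH_quartic.
have s1 : size (1 - N *: 'X : {poly R}) = 2%N.
  by rewrite addrC size_polyDl ?size_polyN ?size_scale ?size_polyX ?size_poly1.
have s2 : size ('X^2 - (1 + d^+2)%:P : {poly R}) = 3%N by rewrite size_XnsubC.
have s3 : size ((1 - N *: 'X : {poly R})^+2) = 3%N.
  have := size_exp (1 - N *: 'X : {poly R}) 2; rewrite s1 /=.
  by case: (size _) => // n /= ->.
have nz : forall p : {poly R}, size p = 3%N -> p != 0.
  by move=> p hp; apply/eqP => p0; move: hp; rewrite p0 size_poly0.
rewrite size_polyDl size_mul ?s2 ?s3 ?nz //.
by rewrite size_scale // size_XnsubC.
Qed.

Theorem proposition1 (R : realType) (N d A : R) :
  0 < N -> N < 1 -> 0 < d -> d ^+ 2 <= N ^-2 - 1 -> 0 < A ->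
  exists s : seq R[i],
    [/\ size s = 4%N,
        KH_quartic_C N d A = lead_coef (KH_quartic_C N d A) *: \prod_(z <- s) ('X - z%:P),
        count (fun z : R[i] => complex.Im z == 0) s = 2%N
      & count (fun z : R[i] => complex.Im z != 0) s = 2%N].
Proof.
move=> N0 N1 d0 hd A0.
set P := KH_quartic N d A.
set e := 1 + d^+2.
have e1 : 1 < e.
  have : 0 < d^+2 by apply: exprn_gt0.
  rewrite /e; lra.
set t := N^-1.
have Nt : N * t = 1 by rewrite /t mulfV // gt_eqF.
have t1 : 1 < t by rewrite /t invf_gt1.
have ht : d^+2 <= t^+2 - 1 by rewrite /t exprVn.
have NE : N^+2 * e <= 1.
  have : N^+2 * d^+2 <= N^+2 * (t^+2 - 1) by rewrite ler_pM2l // exprn_gt0.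
  have -> : N^+2 * (t^+2 - 1) = (N*t)^+2 - N^+2 by ring.
  rewrite Nt /e; lra.
have [a] : {x | x \in `]1, t[ & root P x}.
  apply: poly_ivtoo; first lra.
  rewrite !hP -/e.
  have -> : (1 - N*t) = 0 by lra.
  rewrite nmulr_rlt0.
    have : 1 < t^+2 by nra.
    rewrite expr0n /= mul0r add0r => ?; apply: mulr_gt0; lra.
  have : 0 < (1-N)^+2 by apply: exprn_gt0; lra.
  rewrite expr1n mulr1 subrr mulr0 addr0 => hN.
  rewrite pmulr_rlt0 //; lra.
rewrite in_itv /= => /andP[a1 at1] /eqP; rewrite hP -/e => Pa.
have [b] : {x | x \in `]-t, -1[ & root P x}.
  apply: poly_ivtoo; first lra.
  rewrite !hP -/e.
  have -> : 1 - N * -t = 2 by rewrite mulrN Nt; lra.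
  rewrite pmulr_rlt0.
    have : 0 < (1+N)^+2 by apply: exprn_gt0; lra.
    rewrite mulrN mulr1 opprK sqrrN expr1n subrr mulr0 addr0 => hN.
    rewrite pmulr_rlt0 //; lra.
  have : 1 < t^+2 by nra.
  rewrite ?sqrrN /e => ?.
  have : 0 <= 2^+2 * (t^+2 - (1 + d^+2)) by apply: mulr_ge0; [apply: sqr_ge0|lra].
  have : 0 < A * (t^+2 - 1) by apply: mulr_gt0; lra.
  lra.
rewrite in_itv /= => /andP[bt b1] /eqP; rewrite hP -/e => Pb.
have [a1' ae] := range _ _ _ _ _ N0 N1 e1 A0 Pa.
have [b1' be] := range _ _ _ _ _ N0 N1 e1 A0 Pb.
have [q1 hq1] : exists q, P = q * ('X - a%:P).
  by apply/factor_theorem; rewrite /root hP -/e Pa.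
have [Q hQ] : exists q, q1 = q * ('X - b%:P).
  apply/factor_theorem; rewrite /root.
  have : P.[b] = 0 by rewrite hP -/e Pb.
  rewrite hq1 hornerM hornerXsubC => /eqP; rewrite mulf_eq0 => /orP[//|].
  rewrite subr_eq0 => /eqP ba; lra.
have hPQ : P = Q * ('X - b%:P) * ('X - a%:P) by rewrite hq1 hQ.
have noroot : forall x, Q.[x] != 0.
  move=> x; apply/negP => /eqP Qx.
  have : P.[x] = 0 by rewrite hPQ !hornerE Qx; ring.
  rewrite hP -/e => Px.
  have [x1 xe] := range _ _ _ _ _ N0 N1 e1 A0 Px.
  have [xp|xn] := ltP 0 x.
  - have x1' : 1 < x by nra.
    have [xa|ax|xa] := ltgtP x a.
    + exact: (pos_inj _ _ _ _ _ _ N0 NE e1 x1' xa ae Px Pa).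
    + exact: (pos_inj _ _ _ _ _ _ N0 NE e1 a1 ax xe Pa Px).
    + subst x.
      have : P^`().[a] = 0.
        rewrite hPQ derivM derivXsubC !hornerE Qx; ring.
      rewrite hdP -/e => dPa.
      exact: (der _ _ _ _ _ N0 NE e1 a1' ae Pa dPa).
  - have x1' : x < -1.
      have xn' : x < 0.
        rewrite lt_neqAle xn andbT; apply/eqP=> x0; move: x1; rewrite x0 expr2 mul0r; lra.
      nra.
    have [xb|bx|xb] := ltgtP x b.
    + exact: (neg_inj _ _ _ _ _ _ N0 e1 xb b1 xe Px Pb).
    + exact: (neg_inj _ _ _ _ _ _ N0 e1 bx x1' be Pb Px).
    + subst x.
      have : P^`().[b] = 0.
        rewrite hPQ mulrAC derivM derivXsubC !hornerE Qx; ring.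
      rewrite hdP -/e => dPb.
      exact: (der _ _ _ _ _ N0 NE e1 b1' be Pb dPb).
have Q0 : Q != 0 by apply/eqP => Q0; move: (noroot 0); rewrite Q0 horner0 eqxx.
set Qc := map_poly (real_complex R) Q.
have Qc0 : Qc != 0 by rewrite map_poly_eq0.
have [rs hrs] := closed_field_poly_normal Qc.
have hPC : KH_quartic_C N d A = Qc * ('X - (real_complex R b)%:P) * ('X - (real_complex R a)%:P).
  by rewrite /KH_quartic_C -/P hPQ !rmorphM /= !map_polyXsubC.
have lq0 : lead_coef Qc != 0 by rewrite lead_coef_eq0.
have hPC2 : KH_quartic_C N d A = lead_coef Qc *: \prod_(z <- real_complex R b :: real_complex R a :: rs) ('X - z%:P).
  rewrite hPC {1}hrs !big_cons -!scalerAl; congr (_ *: _); ring.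
have hlead : lead_coef (KH_quartic_C N d A) = lead_coef Qc.
  by rewrite hPC2 lead_coefZ (monicP (monic_prod_XsubC _ _ _)) mulr1.
have rsnr : forall z, z \in rs -> complex.Im z != 0.
  move=> z zrs; apply/negP => /eqP z0.
  have : root Qc z by rewrite hrs rootZ // root_prod_XsubC.
  have -> : z = real_complex R (complex.Re z) by case: z z0 {zrs} => /= x y ->.
  by rewrite rootE horner_map fmorph_eq0 (negbTE (noroot _)).
have srs : size rs = 2%N.
  have h1 : size Qc = (size rs).+1 by rewrite hrs size_scale // size_prod_XsubC.
  have h2 : size P = 5%N by apply: sizeP; rewrite gt_eqF.
  move: h2; rewrite hPQ !size_mul ?size_XsubC ?mulf_neq0 ?polyXsubC_eq0 //.
  rewrite -(size_map_poly (real_complex R)) -/Qc h1 /=.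
  by case: (size rs) => [|[|[|n]]] //=; rewrite !addnS.
have c1 : count (fun z : R[i] => complex.Im z == 0) rs = 0%N.
  rewrite (eq_in_count (a2 := pred0)) ?count_pred0 // => z /rsnr /negbTE -> //.
have c2 : count (fun z : R[i] => complex.Im z != 0) rs = 2%N.
  rewrite (eq_in_count (a2 := predT)) ?count_predT // => z /rsnr -> //.
exists [:: real_complex R b, real_complex R a & rs]; split.
- by rewrite /= srs.
- by rewrite hlead.
- by rewrite /= c1 eqxx.
- by rewrite /= c2 eqxx.
Qed.
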